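(* Let $M=(S,\mathrm{Act},P)$ be an MDP, $T\subseteq S$, $\mathrm{opt}\in\{\min,\max\}$, $r$ the least fixed point of $\tilde D^{\mathrm{opt}}$, $Z=\{s\in S\mid\Pr^{\mathrm{opt}}_s(\Diamond T)=0\}$, and $\sigma$ a strategy with $\Pr^\sigma_s(\Diamond T)=\Pr^{\mathrm{opt}}_s(\Diamond T)$ for all $s\in S$. For $s\in S$ let $z(s)$ be the probability, in the Markov chain induced by $\sigma$ started at $s$, of the set of paths $s_0s_1\ldots$ for which there is $i$ with $s_i\in Z$ and $s_j\notin T$ for all $j<i$. Then for all $s\in S$: $r(s)<\infty$ implies $z(s)>0$.
   Context: An MDP is a tuple $M=(S,\mathrm{Act},P)$ with $S$ finite, $\mathrm{Act}$ finite, $P\colon S\times\mathrm{Act}\times S\to[0,1]$ with $\sum_{s'}P(s,a,s')\in\{0,1\}$; $\mathrm{Act}(s)=\{a\mid\sum_{s'}P(s,a,s')=1\}$ is nonempty for all $s$; $\mathrm{Post}(s,a)=\{s'\mid P(s,a,s')>0\}$. A strategy is $\sigma\colon S\to\mathrm{Act}$ with $\sigma(s)\in\mathrm{Act}(s)$, inducing a Markov chain with transitions $P(s,\sigma(s),\cdot)$; $\Pr^\sigma_s(\Diamond T)$ is the probability of visiting $T$ from $s$ and $\Pr^{\mathrm{opt}}_s(\Diamond T)=\mathrm{opt}_\sigma\Pr^\sigma_s(\Diamond T)$. $\mathbb{N}_\infty=\mathbb{N}\cup\{\infty\}$ with $\infty+1=\infty$. $\tilde D^{\mathrm{opt}}(r)(s)=\infty$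 for $s\in T$ and $\mathrm{opt}_{a\in\mathrm{Act}(s)}\big(\min_{s'\in\mathrm{Post}(s,a)}r(s')+[\exists u,v\in\mathrm{Post}(s,a)\colon r(u)\ne r(v)]\big)$ for $s\notin T$ ($[\varphi]\in\{0,1\}$ the Iverson bracket); its least fixed point w.r.t. the pointwise order exists. *)

(* Defs.v *)
From mathcomp Require Import all_boot all_order all_algebra.
From mathcomp Require Import boolp classical_sets reals.
Set Implicit Arguments. Unset Strict Implicit. Unset Printing Implicit Defensive.
Import Order.TTheory GRing.Theory Num.Theory.
Local Open Scope ring_scope.
Local Open Scope classical_set_scope.

Section MDP.
Variables (R : realType) (S A : finType).

Definition Act (P : S -> A -> S -> R) (s : S) : pred A :=
  [pred a | \sum_(s' : S) P s a s' == 1].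

Definition Post (P : S -> A -> S -> R) (s : S) (a : A) : pred S :=
  [pred s' | 0 < P s a s'].

Definition is_MDP (P : S -> A -> S -> R) : Prop :=
  (forall s a s', 0 <= P s a s' <= 1) /\
  (forall s a, \sum_(s' : S) P s a s' = 0 \/ \sum_(s' : S) P s a s' = 1) /\
  (forall s, exists a, a \in Act P s).

Definition is_strategy (P : S -> A -> S -> R) (sigma : S -> A) : Prop :=
  forall s, sigma s \in Act P s.

Definition induced (P : S -> A -> S -> R) (sigma : S -> A) : S -> S -> R :=
  fun s s' => P s (sigma s) s'.

(* untiln Q Av G n s = probability, in the Markov chain Q started at s, of the
   set of paths s_0 s_1 ... such that there is i <= n with s_i in G and
   s_j \notin Av for all j < i. *)
Fixpoint untiln (Q : S -> S -> R) (Av G : {set S}) (n : nat) (s : S) : R :=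
  if s \in G then 1
  else if s \in Av then 0
  else match n with
       | 0 => 0
       | n'.+1 => \sum_(s' : S) Q s s' * untiln Q Av G n' s'
       end.

(* Probability of the set of paths s_0 s_1 ... such that there is i with
   s_i in G and s_j \notin Av for all j < i: by sigma-additivity of the path
   measure, the supremum of the (increasing) step-bounded probabilities. *)
Definition until_prob (Q : S -> S -> R) (Av G : {set S}) (s : S) : R :=
  sup (range (fun n => untiln Q Av G n s)).

Definition reach_prob (Q : S -> S -> R) (T : {set S}) (s : S) : R :=
  until_prob Q (finset.set0) T s.

Inductive opt := Min | Max.

Definition Pr_opt (P : S -> A -> S -> R) (T : {set S}) (o : opt) (s : S) : R :=
  let E := [set reach_prob (induced P sigma) T s | sigma in is_strategy P] in
  match o with Min => inf E | Max => sup E end.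

(* N_infinity, with None = infinity *)
Definition Ninf := option nat.

Definition leNi (x y : Ninf) : bool :=
  match x, y with
  | _, None => true
  | None, Some _ => false
  | Some m, Some n => (m <= n)%N
  end.

Definition minNi (x y : Ninf) : Ninf := if leNi x y then x else y.
Definition maxNi (x y : Ninf) : Ninf := if leNi x y then y else x.

Definition addNi (x : Ninf) (k : nat) : Ninf :=
  match x with None => None | Some m => Some (m + k)%N end.

Definition Dtilde (P : S -> A -> S -> R) (T : {set S}) (o : opt)
    (r : S -> Ninf) (s : S) : Ninf :=
  if s \in T then None
  else
    let f a :=
      addNi (\big[minNi/None]_(s' | s' \in Post P s a) r s')
            (nat_of_bool [exists u, exists v,
               [&& u \in Post P s a, v \in Post P s a & r u != r v]]) in
    match o with
    | Min => \big[minNi/None]_(a | a \in Act P s) f a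
    | Max => \big[maxNi/Some 0%N]_(a | a \in Act P s) f a
    end.

Definition is_lfp (F : (S -> Ninf) -> S -> Ninf) (r : S -> Ninf) : Prop :=
  (forall s, F r s = r s) /\
  (forall r' : S -> Ninf, (forall s, F r' s = r' s) -> forall s, leNi (r s) (r' s)).

Definition Zset (P : S -> A -> S -> R) (T : {set S}) (o : opt) : {set S} :=
  [set s | Pr_opt P T o s == 0].

End MDP.

(* Main.v *)
Require Import Defs.
From mathcomp Require Import all_boot all_order all_algebra.
From mathcomp Require Import boolp classical_sets reals.
From mathcomp Require Import lra.
Import Order.TTheory GRing.Theory Num.Theory.
Local Open Scope ring_scope.

Set Implicit Arguments. Unset Strict Implicit.
Section Gen.
Variables (R : realType) (S : finType) (Q : S -> S -> R).
Hypothesis Q0 : forall u v, 0 <= Q u v.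
Hypothesis Q1 : forall u, \sum_v Q u v = 1.
Variables (Av G : {set S}).

Lemma untiln_ge0 n s : 0 <= untiln Q Av G n s.
Proof.
elim: n s => [|n IH] s /=; first by case: ifP => // _; case: ifP.
case: ifP => // _; case: ifP => // _.
by apply: sumr_ge0 => v _; apply: mulr_ge0.
Qed.

Lemma untiln_le1 n s : untiln Q Av G n s <= 1.
Proof.
elim: n s => [|n IH] s /=; first by case: ifP => // _; case: ifP.
case: ifP => // _; case: ifP => // _.
rewrite -(Q1 s); apply: ler_sum => v _.
by rewrite -{2}(mulr1 (Q s v)); apply: ler_wpM2l.
Qed.

Lemma untiln_step n s : untiln Q Av G n s <= untiln Q Av G n.+1 s.
Proof.
elim: n s => [|n IH] s.
  have := untiln_ge0 0; rewrite [untiln _ _ _ 1 _]/= /= => h0.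
  case: ifP => // _; case: ifP => // _.
  by apply: sumr_ge0 => v _; apply: mulr_ge0 => //; apply: h0.
rewrite [untiln _ _ _ n.+2 _]/= /=; case: ifP => // _; case: ifP => // _.
by apply: ler_sum => v _; apply: ler_wpM2l.
Qed.

Lemma untiln_mono n m s : (n <= m)%N -> untiln Q Av G n s <= untiln Q Av G m s.
Proof.
elim: m => [|m IH]; first by rewrite leqn0 => /eqP ->.
rewrite leq_eqVlt => /orP [/eqP -> //|]; rewrite ltnS => /IH h.
exact: le_trans h (untiln_step _ _).
Qed.

Lemma has_sup_untiln s : has_sup (range (fun n => untiln Q Av G n s)).
Proof.
split; first by exists (untiln Q Av G 0 s), 0%N.
by exists 1 => _ [n _ <-]; apply: untiln_le1.
Qed.

Lemma untiln_le_until n s : untiln Q Av G n s <= until_prob Q Av G s.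
Proof. by apply: sup_upper_bound; [apply: has_sup_untiln | exists n]. Qed.

Lemma until_le1 s : until_prob Q Av G s <= 1.
Proof.
apply: ge_sup; first by exists (untiln Q Av G 0 s), 0%N.
by move=> _ [n _ <-]; apply: untiln_le1.
Qed.

Lemma until_ge0 s : 0 <= until_prob Q Av G s.
Proof. exact: le_trans (untiln_ge0 0 s) (untiln_le_until 0 s). Qed.

Lemma until_le_sum s : s \notin G -> s \notin Av ->
  until_prob Q Av G s <= \sum_v Q s v * until_prob Q Av G v.
Proof.
move=> sG sA; apply: ge_sup; first by exists (untiln Q Av G 0 s), 0%N.
move=> _ [[|n] _ <-] /=; rewrite (negbTE sG) (negbTE sA).
  by apply: sumr_ge0 => v _; apply: mulr_ge0 => //; apply: until_ge0.
by apply: ler_sum => v _; apply: ler_wpM2l => //; apply: untiln_le_until.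
Qed.

Lemma until_ge_sum s : s \notin G -> s \notin Av ->
  \sum_v Q s v * until_prob Q Av G v <= until_prob Q Av G s.
Proof.
move=> sG sA; rewrite leNgt; apply/negP => hlt.
set d := (\sum_v Q s v * until_prob Q Av G v - until_prob Q Av G s) / 2.
have d0 : 0 < d by rewrite divr_gt0 // subr_gt0.
have: forall v, exists n, until_prob Q Av G v - d < untiln Q Av G n v.
  move=> v; have [e [n _ <-] he] := sup_adherent d0 (has_sup_untiln v).
  by exists n.
move=> /choice [f hf].
set N := (\max_v f v)%N.
have hN : forall v, until_prob Q Av G v - d <= untiln Q Av G N v.
  move=> v; apply: le_trans (ltW (hf v)) _; apply: untiln_mono.
  exact: (leq_bigmax_cond v).
have := untiln_le_until N.+1 s; rewrite /= (negbTE sG) (negbTE sA).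
have : \sum_v Q s v * (until_prob Q Av G v - d) <= \sum_v Q s v * untiln Q Av G N v.
  by apply: ler_sum => v _; apply: ler_wpM2l.
move=> h1 h2; have := le_trans h1 h2.
rewrite (eq_bigr (fun v => Q s v * until_prob Q Av G v - Q s v * d)); last first.
  by move=> v _; rewrite mulrBr.
rewrite sumrB -mulr_suml Q1 mul1r.
move: hlt; rewrite /d; set a := \sum_v _; set b := until_prob _ _ _ s.
move=> hlt h3. lra.
Qed.

Lemma until_closed (C : {set S}) :
  (forall u, u \in C -> u \notin G) ->
  (forall u v, u \in C -> 0 < Q u v -> v \in C) ->
  forall u, u \in C -> until_prob Q Av G u = 0.
Proof.
move=> CG Ccl.
have h : forall n u, u \in C -> untiln Q Av G n u = 0.
  elim=> [|n IH] u uC /=; rewrite (negbTE (CG u uC)); case: ifP => // _.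
  apply: big1 => v _; have [/Ccl -/(_ uC) vC|] := ltP 0 (Q u v).
    by rewrite IH ?mulr0.
  move=> h; have -> : Q u v = 0 by apply/le_anti/andP; split.
  by rewrite mul0r.
move=> u uC; apply: le_anti; rewrite until_ge0 andbT.
by apply: ge_sup; [exists (untiln Q Av G 0 u), 0%N | move=> _ [n _ <-]; rewrite h].
Qed.

End Gen.
Section LemA.
Variables (R : realType) (S : finType) (Q : S -> S -> R).
Hypothesis Q0 : forall u v, 0 <= Q u v.
Hypothesis Q1 : forall u, \sum_v Q u v = 1.
Variables (T : {set S}).

Lemma y1_succ u v : u \notin T -> reach_prob Q T u = 1 -> 0 < Q u v ->
  reach_prob Q T v = 1.
Proof.
rewrite /reach_prob => uT yu quv.
have h := until_le_sum Q0 Q1 (Av := finset.set0) uT (negbT (finset.in_set0 u)).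
rewrite yu in h.
set y := until_prob Q finset.set0 T in h *.
have hs : \sum_w Q u w * (1 - y w) = 0.
  apply: le_anti; apply/andP; split.
    rewrite (eq_bigr (fun w => Q u w - Q u w * y w)); last by move=> w _; rewrite mulrBr mulr1.
    by rewrite sumrB Q1 subr_le0.
  apply: sumr_ge0 => w _; apply: mulr_ge0 => //; rewrite subr_ge0.
  exact: until_le1.
have hnn : forall w, predT w -> 0 <= Q u w * (1 - y w).
  by move=> w _; apply: mulr_ge0 => //; rewrite subr_ge0; apply: until_le1.
have := psumr_eq0P hnn hs (i := v) isT.
by move=> /eqP; rewrite mulf_eq0 (gt_eqF quv) /= subr_eq0 => /eqP <-.
Qed.

Variable r : S -> Ninf.
Hypothesis hT : forall u k, r u = Some k -> u \notin T.
Hypothesis hP : forall u k, r u = Some k ->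
  (forall v, 0 < Q u v -> leNi (r v) (Some k)) \/
  (exists v, 0 < Q u v /\ ~~ leNi (Some k) (r v)).

Lemma lemA u k : r u = Some k -> reach_prob Q T u < 1.
Proof.
move=> hu; rewrite ltNge; apply/negP => y1.
have y1' : reach_prob Q T u = 1 by apply: le_anti; rewrite y1 until_le1.
have ex : exists k, [exists u, (r u == Some k) && (reach_prob Q T u == 1)].
  by exists k; apply/existsP; exists u; rewrite hu y1' !eqxx.
case: (ex_minnP ex) => m /existsP [um /andP [/eqP rum /eqP yum]] hmin.
pose C := [set u | (r u == Some m) && (reach_prob Q T u == 1)].
have CG : forall u, u \in C -> u \notin T.
  by move=> w; rewrite inE => /andP [/eqP /hT].
have Ccl : forall u v, u \in C -> 0 < Q u v -> v \in C.
  move=> w v; rewrite inE => /andP [/eqP rw /eqP yw] qwv.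
  have wT := hT rw.
  have yv := y1_succ wT yw qwv.
  case: (hP rw) => [hl|[x [qwx hx]]].
    have := hl v qwv; case rv: (r v) => [j|] //= jm.
    have := hmin j.
    have -> : [exists u, (r u == Some j) && (reach_prob Q T u == 1)].
      by apply/existsP; exists v; rewrite rv yv !eqxx.
    move=> /(_ isT) mj; have ejm : j = m by apply/eqP; rewrite eqn_leq jm mj.
    by rewrite inE rv yv ejm !eqxx.
  move: hx; case rx: (r x) => [j|] //= /negP hjm.
  have yx := y1_succ wT yw qwx.
  have := hmin j; have -> : [exists u, (r u == Some j) && (reach_prob Q T u == 1)].
    by apply/existsP; exists x; rewrite rx yx !eqxx.
  by move=> /(_ isT) /hjm.
have umC : um \in C by rewrite inE rum yum !eqxx.
have := @until_closed _ _ _ Q0 Q1 finset.set0 _ _ CG Ccl _ umC.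
by rewrite -/(reach_prob Q T um) yum => /eqP; rewrite oner_eq0.
Qed.

End LemA.

Section LemB.
Variables (R : realType) (S : finType) (Q : S -> S -> R).
Hypothesis Q0 : forall u v, 0 <= Q u v.
Hypothesis Q1 : forall u, \sum_v Q u v = 1.
Variables (T Z : {set S}).
Hypothesis hZ : forall u, (u \in Z) = (reach_prob Q T u == 0).

Lemma lemB u : (forall n, untiln Q T Z n u = 0) -> reach_prob Q T u = 1.
Proof.
pose x := reach_prob Q T.
pose W := [set u | `[< forall n, untiln Q T Z n u = 0 >]].
have WP : forall w, w \in W -> forall n, untiln Q T Z n w = 0.
  by move=> w; rewrite inE => /asboolP.
have WnZ : forall w, w \in W -> w \notin Z.
  move=> w /WP /(_ 0%N) /=; case: ifP => // _ /eqP; by rewrite oner_eq0.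
have Wsucc : forall w v, w \in W -> w \notin T -> 0 < Q w v -> v \in W.
  move=> w v wW wT qwv; rewrite inE; apply/asboolP => n.
  have := WP _ wW n.+1; rewrite /= (negbTE (WnZ _ wW)) (negbTE wT) => hs.
  have hnn : forall i, predT i -> 0 <= Q w i * untiln Q T Z n i.
    by move=> i _; apply: mulr_ge0 => //; apply: untiln_ge0.
  have := psumr_eq0P hnn hs (i := v) isT.
  by move=> /eqP; rewrite mulf_eq0 (gt_eqF qwv) /= => /eqP.
have xT : forall w, w \in T -> x w = 1.
  move=> w wT; apply: le_anti; rewrite until_le1 //=.
  have := @untiln_le_until _ _ _ Q0 Q1 finset.set0 T 0%N w.
  by rewrite /= wT.
move=> hu; have uW : u \in W by rewrite inE; apply/asboolP.
apply: le_anti; rewrite until_le1 //=; rewrite leNgt; apply/negP => lt1.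
have [um Wum hmin] := @arg_minP _ R _ u (mem W) x uW.
set m := x um in hmin.
have m1 : m < 1 by apply: le_lt_trans (hmin _ uW) lt1.
pose C := [set w in W | x w == m].
have CT : forall w, w \in C -> w \notin T.
  move=> w; rewrite inE => /andP [_ /eqP xw]; apply/negP => /xT.
  by rewrite xw => e; move: m1; rewrite e ltxx.
have Ccl : forall w v, w \in C -> 0 < Q w v -> v \in C.
  move=> w v wC qwv; have wT := CT _ wC.
  move: wC; rewrite inE => /andP [wW /eqP xw].
  have vW := Wsucc _ _ wW wT qwv.
  have wZ : reach_prob Q T w != 0 by rewrite -hZ; apply: WnZ.
  have e : x w = \sum_v Q w v * x v.
    apply: le_anti; rewrite until_le_sum ?until_ge_sum //; exact: negbT (finset.in_set0 w).
  have hs : \sum_i Q w i * (x i - m) = 0.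
    rewrite (eq_bigr (fun i => Q w i * x i - Q w i * m)); last by move=> i _; rewrite mulrBr.
    by rewrite sumrB -mulr_suml Q1 mul1r -e xw subrr.
  have hnn : forall i, i \in W -> 0 <= Q w i * (x i - m).
    by move=> i iW; apply: mulr_ge0 => //; rewrite subr_ge0; apply: hmin.
  have hz : \sum_(i | i \notin W) Q w i * (x i - m) = 0.
    apply: big1 => i iW.
    have -> : Q w i = 0.
      apply: le_anti; rewrite Q0 andbT leNgt; apply/negP => /(Wsucc _ _ wW wT).
      by rewrite (negbTE iW).
    by rewrite mul0r.
  have hs' : \sum_(i in W) Q w i * (x i - m) = 0.
    by move: hs; rewrite (bigID (mem W)) /= hz addr0.
  have := psumr_eq0P hnn hs' vW.
  by move=> /eqP; rewrite mulf_eq0 (gt_eqF qwv) /= subr_eq0 => /eqP xv; rewrite inE vW xv eqxx.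
have Wum' : um \in W := Wum.
have umC : um \in C by rewrite inE Wum' eqxx.
have := @until_closed _ _ _ Q0 Q1 finset.set0 _ _ CT Ccl _ umC.
move=> /eqP; rewrite -/(reach_prob Q T um) -hZ => umZ.
by move: (WnZ _ Wum'); rewrite umZ.
Qed.

End LemB.

Lemma leNi_refl x : leNi x x.
Proof. by case: x => //= n. Qed.

Lemma leNi_trans x y z : leNi x y -> leNi y z -> leNi x z.
Proof. by case: x; case: y; case: z => //= a b c; apply: leq_trans. Qed.

Lemma leNi_total x y : leNi x y || leNi y x.
Proof. by case: x; case: y => //= a b; apply: leq_total. Qed.

Lemma minNi_l x y : leNi (minNi x y) x.
Proof. rewrite /minNi; case: ifP => // h; [exact: leNi_refl|].
by have := leNi_total x y; rewrite h. Qed.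

Lemma minNi_r x y : leNi (minNi x y) y.
Proof. rewrite /minNi; case: ifP => // h; exact: leNi_refl. Qed.

Lemma maxNi_l x y : leNi x (maxNi x y).
Proof. rewrite /maxNi; case: ifP => // h; exact: leNi_refl. Qed.

Lemma maxNi_r x y : leNi y (maxNi x y).
Proof. rewrite /maxNi; case: ifP => // h; [exact: leNi_refl|].
by have := leNi_total x y; rewrite h. Qed.

Lemma bigmin_attained (I : finType) (p : pred I) (F : I -> Ninf) j :
  \big[minNi/None]_(i | p i) F i = Some j -> exists i, p i /\ F i = Some j.
Proof.
pose K x := x = None \/ exists i, p i /\ F i = x.
have : K (\big[minNi/None]_(i | p i) F i).
  apply: big_ind; first by left.
    by move=> x y Kx Ky; rewrite /minNi; case: ifP.
  by move=> i pi; right; exists i.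
move=> hK e; rewrite e in hK; case: hK => [//|[i [pi Fi]]]; by exists i.
Qed.

Lemma bigmin_le (I : finType) (p : pred I) (F : I -> Ninf) i :
  p i -> leNi (\big[minNi/None]_(j | p j) F j) (F i).
Proof.
move=> pi; have : i \in index_enum I by rewrite mem_index_enum.
elim: (index_enum I) => [|a l IH] //; rewrite big_cons inE.
case/orP => [/eqP <-|il]; first by rewrite pi; apply: minNi_l.
case: (p a); last exact: IH.
exact: leNi_trans (minNi_r _ _) (IH il).
Qed.

Lemma bigmax_ge (I : finType) (p : pred I) (F : I -> Ninf) i :
  p i -> leNi (F i) (\big[maxNi/Some 0%N]_(j | p j) F j).
Proof.
move=> pi; have : i \in index_enum I by rewrite mem_index_enum.
elim: (index_enum I) => [|a l IH] //; rewrite big_cons inE.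
case/orP => [/eqP <-|il]; first by rewrite pi; apply: maxNi_l.
case: (p a); last exact: IH.
exact: leNi_trans (IH il) (maxNi_r _ _).
Qed.

Definition fD (R : realType) (S A : finType) (P : S -> A -> S -> R)
  (r : S -> Ninf) (s : S) (a : A) : Ninf :=
  addNi (\big[minNi/None]_(s' | s' \in Post P s a) r s')
        (nat_of_bool [exists u, exists v,
               [&& u \in Post P s a, v \in Post P s a & r u != r v]]).

Lemma fprop (R : realType) (S A : finType) (P : S -> A -> S -> R)
  (r : S -> Ninf) u a k :
  leNi (fD P r u a) (Some k) ->
  (forall v, 0 < P u a v -> leNi (r v) (Some k)) \/
  (exists v, 0 < P u a v /\ ~~ leNi (Some k) (r v)).
Proof.
rewrite /fD; case hm: (\big[minNi/None]_(s' | s' \in Post P u a) r s') => [j|] //=.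
have [w [wP rw]] := bigmin_attained hm.
case he: [exists u0, exists v, _] => /= hjk.
  right; exists w; split; first exact: wP.
  by rewrite rw /= -ltnNge; rewrite addn1 in hjk.
left => v vP.
have : r v == r w.
  apply/negPn/negP => neq; move/negbT: he => /existsPn /(_ v) /existsPn /(_ w).
  by rewrite neq andbT; have -> : v \in Post P u a by []; rewrite wP.
by move=> /eqP ->; rewrite rw /=; rewrite addn0 in hjk.
Qed.

Theorem lemma10 (R : realType) (S A : finType) (P : S -> A -> S -> R)
    (T : {set S}) (o : opt) (r : S -> Ninf) (sigma : S -> A) :
  is_MDP P ->
  is_lfp (Dtilde P T o) r ->
  is_strategy P sigma ->
  (forall s, reach_prob (induced P sigma) T s = Pr_opt P T o s) ->
  forall s, r s != None ->
    0 < until_prob (induced P sigma) T (Zset P T o) s.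
Proof.
move=> hM [hfix _] hs hx s rs.
have stoch : forall tau, is_strategy P tau ->
    (forall u v, 0 <= induced P tau u v) /\ (forall u, \sum_v induced P tau u v = 1).
  move=> tau ht; split.
    by move=> u v; have /andP [] := hM.1 u (tau u) v.
  by move=> u; have := ht u; rewrite inE => /eqP.
have rT : forall u k, r u = Some k -> u \notin T.
  by move=> u k ru; apply/negP => uT; have := hfix u; rewrite /Dtilde uT ru.
pose tau u := if o is Max then sigma u else
  odflt (sigma u) [pick a | (a \in Act P u) && leNi (fD P r u a) (r u)].
have htau : is_strategy P tau.
  move=> u; rewrite /tau; case ho: o => //.
  by case: pickP => [a /andP [aA _]|_] //=.
have hf : forall u k, r u = Some k -> leNi (fD P r u (tau u)) (Some k).
  move=> u k ru; have := hfix u; rewrite /Dtilde (negbTE (rT _ _ ru)) ru /tau.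
  case ho: o => hD.
    have [a [aA fa]] := bigmin_attained hD.
    case: pickP => [b /andP [_ h]|none] /=; first by rewrite ru in h.
    by have := none a; rewrite aA /fD fa ru leNi_refl.
  rewrite -hD; exact: bigmax_ge (hs u).
have [tQ0 tQ1] := stoch _ htau.
have hP : forall u k, r u = Some k ->
  (forall v, 0 < induced P tau u v -> leNi (r v) (Some k)) \/
  (exists v, 0 < induced P tau u v /\ ~~ leNi (Some k) (r v)).
  by move=> u k ru; apply: fprop (hf _ _ ru).
have ylt : reach_prob (induced P tau) T s < 1.
  by case rs' : (r s) rs => [k|] // _; apply: (lemA tQ0 tQ1 rT hP rs').
have xy : reach_prob (induced P sigma) T s <= reach_prob (induced P tau) T s.
  case ho: o; last by rewrite /tau ho /=.
  rewrite hx ho /=.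
  apply: ge_inf; last by exists tau.
  exists 0 => _ [sg hsg <-].
  have [q0 q1] := stoch _ hsg.
  exact: (until_ge0 q0 q1).
rewrite ltNge; apply/negP => hle.
have hW : forall n, untiln (induced P sigma) T (Zset P T o) n s = 0.
  have [q0 q1] := stoch _ hs.
  move=> n; apply: le_anti; rewrite untiln_ge0 // andbT.
  exact: le_trans (untiln_le_until q0 q1 _ _ _ _) hle.
have [q0 q1] := stoch _ hs.
have hZ : forall u, (u \in Zset P T o) = (reach_prob (induced P sigma) T u == 0).
  by move=> u; rewrite /Zset inE hx.
have := lemB q0 q1 hZ hW.
move=> x1; move: xy ylt; rewrite x1 => h1 h2.
by have := le_lt_trans h1 h2; rewrite ltxx.
Qed.
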